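(* Let $G$ be a group, $F$ a field of characteristic $0$, and let $R=M_n(F)$ carry the elementary $G$-grading induced by an $n$-tuple $(g_1,\dots,g_n)$ of pairwise distinct elements of $G$. Let $m=x_1x_2\cdots x_k$ be a multilinear graded monomial with $\deg x_1\cdot\deg x_2\cdots\deg x_k=1_G$ which is a graded identity of $R$. Then $m'=x_2\cdots x_k$ is also a graded identity of $R$ (and hence $m$ lies in the $T_G$-ideal generated by $m'$).
   Context: The elementary $G$-grading on $M_n(F)$ induced by $(g_1,\dots,g_n)\in G^n$ is $R_g=\mathrm{span}\{e_{pq}: g_p^{-1}g_q=g\}$. Graded polynomials live in the free $G$-graded algebra on variables each having a prescribed degree in $G$; a graded polynomial $f(x_1,\dots,x_r)$ is a graded identity of $R$ if it vanishes under every substitution $x_i\mapsto a_i\in R_{\deg x_i}$. A $T_G$-ideal is an ideal of the free $G$-graded algebra invariant under all degree-preserving endomorphisms. *)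

(* Defs.v *)
From HB Require Import structures.
From mathcomp Require Import all_boot all_order all_algebra.
Set Implicit Arguments. Unset Strict Implicit. Unset Printing Implicit Defensive.
Import GRing.Theory.
Local Open Scope ring_scope.

Definition is_group (G : Type) (mul : G -> G -> G) (inv : G -> G) (one : G) :=
  [/\ forall a b c, mul a (mul b c) = mul (mul a b) c,
      forall a, mul one a = a,
      forall a, mul a one = a,
      forall a, mul (inv a) a = one
    & forall a, mul a (inv a) = one].

(* Homogeneous component R_d of the elementary grading on M_n(F) induced by
   (g_1,...,g_n) : R_d = span { e_pq : g_p^{-1} g_q = d }. A matrix lies in
   this span iff its entries outside those positions vanish. *)
Definition elem_homog (F : fieldType) (n : nat) (G : Type)
  (mul : G -> G -> G) (inv : G -> G) (g : 'I_n -> G) (d : G) (A : 'M[F]_n) :=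
  forall p q : 'I_n, A p q != 0 -> mul (inv (g p)) (g q) = d.

Definition mx_prod (F : fieldType) (n : nat) (As : seq 'M[F]_n) : 'M[F]_n :=
  foldr (fun A B => A *m B) 1%:M As.

Definition gprod (G : Type) (mul : G -> G -> G) (one : G) (ds : seq G) : G :=
  foldr mul one ds.

Fixpoint homog_subst (F : fieldType) (n : nat) (G : Type)
  (mul : G -> G -> G) (inv : G -> G) (g : 'I_n -> G)
  (ds : seq G) (As : seq 'M[F]_n) : Prop :=
  match ds, As with
  | [::], [::] => True
  | d :: ds', A :: As' => elem_homog mul inv g d A /\ homog_subst mul inv g ds' As'
  | _, _ => False
  end.

(* The multilinear graded monomial x_1 ... x_k whose variables x_i are
   pairwise distinct and have degrees ds = [:: deg x_1; ...; deg x_k] is a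
   graded identity of M_n(F) (elementary grading by g): every substitution
   x_i |-> a_i in R_{deg x_i} gives a_1 ... a_k = 0. *)
Definition monomial_graded_identity (F : fieldType) (n : nat) (G : Type)
  (mul : G -> G -> G) (inv : G -> G) (g : 'I_n -> G) (ds : seq G) :=
  forall As : seq 'M[F]_n, homog_subst mul inv g ds As -> mx_prod As = 0.

(* Main.v *)
Require Import Defs.
From HB Require Import structures.
From mathcomp Require Import all_boot all_order all_algebra.
Import GRing.Theory.
Local Open Scope ring_scope.

Lemma mulmx_nz_ex (F : fieldType) n (A B : 'M[F]_n) p q :
  (A *m B) p q != 0 -> exists r, (A p r != 0) /\ (B r q != 0).
Proof.
rewrite mxE => H.
case: (boolP [exists r, (A p r != 0) && (B r q != 0)]).
  by move/existsP=> [r /andP [H1 H2]]; exists r.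
move=> /existsPn Hn; exfalso; move/negP: H; apply; apply/eqP.
apply: big1 => r _; have := Hn r; rewrite negb_and !negbK.
by case/orP=> /eqP ->; rewrite ?mul0r ?mulr0.
Qed.

Lemma prod_homog (G : Type) (mul : G -> G -> G) (inv : G -> G) (one : G)
  (HG : is_group mul inv one) (F : fieldType) n (g : 'I_n -> G) :
  forall ds (As : seq 'M[F]_n), homog_subst mul inv g ds As ->
  elem_homog mul inv g (gprod mul one ds) (mx_prod As).
Proof.
case: HG => Ha H1l H1r Hvl Hvr.
elim=> [|d ds IH] [|A As] //=.
  move=> _ p q; rewrite mxE.
  by case: (eqVneq p q) => [->|]; [rewrite Hvl | rewrite eqxx].
move=> [HA HAs] p q /mulmx_nz_ex [r [H1 H2]].
rewrite -(HA _ _ H1) -(IH _ HAs _ _ H2).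
by rewrite -Ha (Ha (g r)) Hvr H1l.
Qed.

Theorem mainTheorem3
  (G : Type) (mul : G -> G -> G) (inv : G -> G) (one : G)
  (HG : is_group mul inv one)
  (F : fieldType) (hchar : [pchar F] =i pred0)
  (n : nat) (g : 'I_n -> G) (g_inj : injective g)
  (d1 : G) (ds : seq G)
  (hdeg : gprod mul one (d1 :: ds) = one)
  (hid : @monomial_graded_identity F n G mul inv g (d1 :: ds)) :
  @monomial_graded_identity F n G mul inv g ds.
Proof.
move=> As HAs.
have Hh := @prod_homog G mul inv one HG F n g ds As HAs.
apply/eqP/negPn/negP => Hnz.
have [p [q Hpq]] : exists p q, mx_prod As p q != 0.
  case: (boolP [exists p, exists q, mx_prod As p q != 0]).
    by move/existsP=> [p /existsP [q H]]; exists p, q.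
  move=> /existsPn Hn; exfalso; move/negP: Hnz; apply; apply/eqP/matrixP => p q.
  by have /existsPn /(_ q) := Hn p; rewrite negbK mxE => /eqP.
have Hd := Hh _ _ Hpq.
case: HG => Ha H1l H1r Hvl Hvr.
have Hsub : homog_subst mul inv g (d1 :: ds) (delta_mx q p :: As).
  split=> //; move=> i j; rewrite mxE.
  case: (eqVneq i q) => [->|]; last by rewrite eqxx.
  case: (eqVneq j p) => [->|]; last by rewrite eqxx.
  move=> _; move: hdeg; rewrite /= -Hd => hdeg.
  (* d1 = inv(inv gp * gq) ; show inv gq * gp = d1 *)
  have E : d1 = mul d1 (mul (inv (g p)) (mul (g q) (mul (inv (g q)) (g p)))).
    by rewrite (Ha (g q)) Hvr H1l Hvl H1r.
  by rewrite E (Ha (inv (g p))) (Ha d1) hdeg H1l.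
have := hid _ Hsub; rewrite /= => /matrixP /(_ q q).
rewrite !mxE (bigD1 p) //= !mxE !eqxx mul1r big1 ?addr0.
  by move=> E; move/eqP: Hpq; rewrite E.
by move=> j /negbTE Hj; rewrite !mxE Hj andbF mul0r.
Qed.
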